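(* Let $\mathfrak g$ be a complex Lie algebra with bracket $[\ ,\ ]$, let $\tilde{\mathfrak g}=\mathfrak g\oplus\mathbb C$, and for $\lambda\in\mathbb C$ let $\mathfrak R(\lambda):\tilde{\mathfrak g}\otimes\tilde{\mathfrak g}\to\tilde{\mathfrak g}\otimes\tilde{\mathfrak g}$ be $\mathfrak R(\lambda)\big((x+\alpha)\otimes(y+\beta)\big)=(y+\beta)\otimes(x+\alpha)+[x,y]\otimes\lambda$ ($x,y\in\mathfrak g$, $\alpha,\beta\in\mathbb C$). Let $V$ be a complex vector space and $A:\mathfrak g\otimes V\to V$ a linear map, and define $\mathfrak R_V(\lambda):\tilde{\mathfrak g}\otimes V\to V\otimes\tilde{\mathfrak g}$ by $\mathfrak R_V(\lambda)\big((x+\alpha)\otimes v\big)=v\otimes(x+\alpha)+A(x,v)\otimes\lambda$ ($x\in\mathfrak g$, $v\in V$, $\alpha\in\mathbb C$). Then the equality of maps $\tilde{\mathfrak g}\otimes\tilde{\mathfrak g}\otimes V\to V\otimes\tilde{\mathfrak g}\otimes\tilde{\mathfrak g}$ $$(\mathfrak R_V(\lambda)\otimes 1_{\tilde{\mathfrak g}})\circ(1_{\tilde{\mathfrak g}}\otimes\mathfrak R_V(\lambda))\circ(\mathfrak R(\lambda)\otimes 1_V)=(1_V\otimes\mathfrak R(\lambda))\circ(\mathfrak R_V(\lambda)\otimes 1_{\tilde{\mathfrak g}})\circ(1_{\tilde{\mathfrak g}}\otimes\mathfrak R_V(\lambda))$$ holds for every $\lambda\in\mathbb C$ if and only if $A$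 is a $\mathfrak g$-action on $V$, i.e. $A([x,y],v)=A(x,A(y,v))-A(y,A(x,v))$ for all $x,y\in\mathfrak g$, $v\in V$.
   Context: All tensor products are over $\mathbb C$; $\lambda$, $[x,y]$ are regarded as elements of $\tilde{\mathfrak g}=\mathfrak g\oplus\mathbb C$ via the obvious inclusions. *)

(* Defs.v *)
From HB Require Import structures.
From mathcomp Require Import all_boot all_order all_algebra.
From mathcomp Require Import complex.
From mathcomp Require Import Rstruct.
Set Implicit Arguments. Unset Strict Implicit. Unset Printing Implicit Defensive.
Import Order.TTheory GRing.Theory Num.Theory.
Local Open Scope ring_scope.

Notation CC := (complex Rdefinitions.R).

Definition is_lie_bracket (g : lmodType CC) (br : g -> g -> g) : Prop :=
  [/\ (forall (c : CC) x x' y, br (c *: x + x') y = c *: br x y + br x' y),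
      (forall (c : CC) x y y', br x (c *: y + y') = c *: br x y + br x y'),
      (forall x, br x x = 0) &
      (forall x y z, br x (br y z) + br y (br z x) + br z (br x y) = 0)].

(* A linear map g (x) V -> V, i.e. a bilinear map g -> V -> V. *)
Definition bilinear_map (g V : lmodType CC) (A : g -> V -> V) : Prop :=
  (forall (c : CC) x x' v, A (c *: x + x') v = c *: A x v + A x' v) /\
  (forall (c : CC) x v v', A x (c *: v + v') = c *: A x v + A x v').

Definition is_g_action (g V : lmodType CC) (br : g -> g -> g) (A : g -> V -> V) : Prop :=
  forall x y v, A (br x y) v = A x (A y v) - A y (A x v).

Definition gtilde (g : lmodType CC) : lmodType CC := (g * CC^o)%type.

(* ---------- Triple tensor products X (x) Y (x) Z over C ----------
   An element is represented by a formal sum of pure tensors x (x) y (x) z,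
   i.e. a list of triples.  Two formal sums represent the same tensor iff
   every trilinear map into every C-vector space takes the same value on them
   (universal property of the tensor product). *)
Definition tens3 (X Y Z : Type) := seq (X * Y * Z).

Definition trilinear (X Y Z U : lmodType CC) (f : X -> Y -> Z -> U) : Prop :=
  [/\ (forall (c : CC) x x' y z, f (c *: x + x') y z = c *: f x y z + f x' y z),
      (forall (c : CC) x y y' z, f x (c *: y + y') z = c *: f x y z + f x y' z) &
      (forall (c : CC) x y z z', f x y (c *: z + z') = c *: f x y z + f x y z')].

Definition tens3_eq (X Y Z : lmodType CC) (s t : tens3 X Y Z) : Prop :=
  forall (U : lmodType CC) (f : X -> Y -> Z -> U), trilinear f ->
    \sum_(p <- s) f p.1.1 p.1.2 p.2 = \sum_(p <- t) f p.1.1 p.1.2 p.2.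

(* Extension by linearity of a map given on pure tensors. *)
Definition tlift (X Y Z X' Y' Z' : Type) (f : X -> Y -> Z -> tens3 X' Y' Z')
  (s : tens3 X Y Z) : tens3 X' Y' Z' :=
  flatten [seq f p.1.1 p.1.2 p.2 | p <- s].

Section Maps.
Variables (g V : lmodType CC) (br : g -> g -> g) (A : g -> V -> V).

(* Values of R(lambda) and R_V(lambda) on pure tensors, as formal sums
   (lists of pairs) of pure tensors. *)
Definition Rl (l : CC) (a b : gtilde g) : seq (gtilde g * gtilde g) :=
  [:: (b, a); ((br a.1 b.1, 0) : gtilde g, (0, l) : gtilde g)].

Definition RVl (l : CC) (a : gtilde g) (v : V) : seq (V * gtilde g) :=
  [:: (v, a); (A a.1 v, (0, l) : gtilde g)].

Definition R_x_1V (l : CC) :=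
  tlift (fun (a b : gtilde g) (v : V) => [seq (p.1, p.2, v) | p <- Rl l a b]).
Definition one_x_RV_1 (l : CC) :=
  tlift (fun (a b : gtilde g) (v : V) => [seq (a, p.1, p.2) | p <- RVl l b v]).
Definition RV_x_1 (l : CC) :=
  tlift (fun (a : gtilde g) (v : V) (b : gtilde g) => [seq (p.1, p.2, b) | p <- RVl l a v]).
Definition oneV_x_R (l : CC) :=
  tlift (fun (v : V) (a b : gtilde g) => [seq (v, p.1, p.2) | p <- Rl l a b]).

End Maps.

(* Main.v *)
Require Import Defs.
From HB Require Import structures.
From mathcomp Require Import all_boot all_order all_algebra.
From mathcomp Require Import complex Rstruct.
Import GRing.Theory.
Local Open Scope ring_scope.

Lemma sum_tlift {X Y Z X2 Y2 Z2 : Type} {U : nmodType} (F : X -> Y -> Z -> tens3 X2 Y2 Z2) (h : X2 * Y2 * Z2 -> U) s :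
  \sum_(p <- tlift F s) h p = \sum_(q <- s) \sum_(p <- F q.1.1 q.1.2 q.2) h p.
Proof. by rewrite /tlift big_flatten /= big_map. Qed.

Lemma sum_tlift3 {X Y Z X1 Y1 Z1 X2 Y2 Z2 X3 Y3 Z3 : Type} {U : nmodType}
  (H : X -> Y -> Z -> tens3 X1 Y1 Z1) (G : X1 -> Y1 -> Z1 -> tens3 X2 Y2 Z2)
  (F : X2 -> Y2 -> Z2 -> tens3 X3 Y3 Z3) (h : X3 * Y3 * Z3 -> U) s :
  \sum_(p <- tlift F (tlift G (tlift H s))) h p =
  \sum_(t <- s) \sum_(r <- H t.1.1 t.1.2 t.2) \sum_(q <- G r.1.1 r.1.2 r.2)
      \sum_(p <- F q.1.1 q.1.2 q.2) h p.
Proof.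
rewrite (sum_tlift F) (sum_tlift G) (sum_tlift H).
by apply: eq_bigr => t _; apply: eq_bigr => r _.
Qed.

Lemma dbl0 (M : zmodType) (a : M) : a = a + a -> a = 0.
Proof. by move=> h; apply: (addrI a); rewrite addr0 -h. Qed.

Lemma grp (U : zmodType) (a b c q e r p : U) :
  a + b + (c+q) + (e + r) = a + e + c + (b + p) + (q + r - p).
Proof.
rewrite [q + r - p]addrC !addrA addrK.
rewrite -!addrA; congr (_ + _).
by rewrite (addrCA b c) (addrCA e c) (addrCA q e) (addrCA b e).
Qed.

Section S.
Variables (g : lmodType CC) (br : g -> g -> g) (V : lmodType CC) (A : g -> V -> V).
Hypothesis Hbr : is_lie_bracket br.
Hypothesis HA : bilinear_map A.
Lemma A0v v : A 0 v = 0.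
Proof. case: HA => h _; apply: dbl0; by rewrite -{1}(addr0 0) -{1}(scale1r 0) h scale1r. Qed.
Lemma Ax0 x : A x 0 = 0.
Proof. case: HA => _ h; apply: dbl0; by rewrite -{1}(addr0 0) -{1}(scale1r 0) h scale1r. Qed.
Lemma br0y y : br 0 y = 0.
Proof. case: Hbr => h _ _ _; apply: dbl0; by rewrite -{1}(addr0 0) -{1}(scale1r 0) h scale1r. Qed.
Lemma brx0 y : br y 0 = 0.
Proof. case: Hbr => _ h _ _; apply: dbl0; by rewrite -{1}(addr0 0) -{1}(scale1r 0) h scale1r. Qed.

Definition Dt (l : CC) (t : gtilde g * gtilde g * V) : V :=
  A t.1.2.1 (A t.1.1.1 t.2) + A (br t.1.1.1 t.1.2.1) t.2 - A t.1.1.1 (A t.1.2.1 t.2).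

Lemma core l s (U : lmodType CC) (f : V -> gtilde g -> gtilde g -> U) : trilinear f ->
  \sum_(p <- RV_x_1 A l (one_x_RV_1 A l (R_x_1V br l s))) f p.1.1 p.1.2 p.2 =
  \sum_(p <- oneV_x_R br l (RV_x_1 A l (one_x_RV_1 A l s))) f p.1.1 p.1.2 p.2
  + \sum_(t <- s) f (Dt l t) (0, l) (0, l).
Proof.
move=> [f1 f2 f3].
have f0 : forall b c, f 0 b c = 0.
  move=> b c; apply: dbl0; by rewrite -{1}(addr0 0) -{1}(scale1r 0) f1 scale1r.
have f0' : forall a c, f a (0, 0) c = 0.
  move=> a c; have := (f2 1 a 0 0 c); rewrite !scale1r addr0 => h.
  by apply: dbl0; exact: h.
have fB : forall u w b c, f (u - w) b c = f u b c - f w b c.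
  by move=> u w b c; rewrite addrC -scaleN1r f1 scaleN1r addrC.
have fD : forall u w b c, f (u + w) b c = f u b c + f w b c.
  by move=> u w b c; rewrite -{1}(scale1r u) f1 scale1r.
rewrite /RV_x_1 /one_x_RV_1 /R_x_1V /oneV_x_R !(sum_tlift3 _ _ _ (fun p => f p.1.1 p.1.2 p.2)).
rewrite -big_split; apply: eq_bigr => [[[[x al] [y be]] v]] _.
rewrite /Rl /RVl; cbn [map fst snd]; rewrite !big_cons !big_nil; cbn [fst snd].
rewrite /Dt; cbn [fst snd].
rewrite A0v Ax0 !br0y !brx0 fB fD !f0 !f0' !addr0.
exact: grp.
Qed.

Lemma back l s : is_g_action br A ->
  tens3_eq (RV_x_1 A l (one_x_RV_1 A l (R_x_1V br l s)))
           (oneV_x_R br l (RV_x_1 A l (one_x_RV_1 A l s))).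
Proof.
move=> Hact U f ftri; rewrite core // -[RHS]addr0; congr (_ + _); apply: big1 => t _.
have -> : Dt l t = 0 by rewrite /Dt Hact addrCA subrr addr0 subrr.
case: ftri => f1 _ _; apply: dbl0; by rewrite -{1}(addr0 0) -{1}(scale1r 0) f1 scale1r.
Qed.

Definition ff (w : V) (a b : gtilde g) : V := (a.2 * b.2) *: w.
Lemma ff_tri : trilinear ff.
Proof.
rewrite /ff; split => c x x' y z /=.
- by rewrite scalerDr !scalerA mulrC.
- by rewrite -[c *: x'.2]/(c * x'.2) mulrDl scalerDl -mulrA -scalerA.
- by rewrite -[c *: y.2]/(c * y.2) mulrDr scalerDl scalerA mulrCA.
Qed.

Lemma forth : (forall l s, tens3_eq (RV_x_1 A l (one_x_RV_1 A l (R_x_1V br l s)))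
           (oneV_x_R br l (RV_x_1 A l (one_x_RV_1 A l s)))) -> is_g_action br A.
Proof.
move=> H x y v.
have := core 1 [:: (((x, 0), (y, 0)), v)] V ff ff_tri.
rewrite (H 1 [:: (((x, 0), (y, 0)), v)] V ff ff_tri) big_seq1 /ff /Dt /=.
rewrite mulr1 scale1r => h.
have := addrI _ (etrans (esym h) (esym (addr0 _))).
move=> /eqP; rewrite subr_eq0 => /eqP E.
by rewrite -E addrAC subrr add0r.
Qed.

End S.

Theorem lemma1p2p1 (g : lmodType CC) (br : g -> g -> g) (V : lmodType CC)
  (A : g -> V -> V) :
  is_lie_bracket br -> bilinear_map A ->
  ((forall (l : CC) (s : tens3 (gtilde g) (gtilde g) V),
      tens3_eq
        (RV_x_1 A l (one_x_RV_1 A l (R_x_1V br l s)))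
        (oneV_x_R br l (RV_x_1 A l (one_x_RV_1 A l s))))
   <-> is_g_action br A).
Proof.
move=> Hbr HA; split; first exact: forth.
by move=> Hact l s; apply: back.
Qed.
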